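(* Let $A,B\in\mathbb{C}^{n\times n}$ be nonzero matrices. If $\theta(A)+\theta(B)<\pi$, then $\det(I+BA)\neq0$.
   Context: For a nonzero $A\in\mathbb{C}^{n\times n}$, its singular angle $\theta(A)\in[0,\pi]$ is defined by $\cos\theta(A)=\inf\{\mathrm{Re}(x^*Ax)/(|x|\,|Ax|): 0\ne x\in\mathbb{C}^n,\ Ax\neq0\}$, where $|\cdot|$ is the Euclidean norm. *)

(* Defs.v *)
From HB Require Import structures.
From mathcomp Require Import all_boot all_order all_algebra.
From mathcomp Require Import all_classical all_reals all_analysis.
From mathcomp Require Import complex.
Set Implicit Arguments. Unset Strict Implicit. Unset Printing Implicit Defensive.
Import Order.TTheory GRing.Theory Num.Theory.
Local Open Scope ring_scope.
Local Open Scope classical_set_scope.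

Section SingularAngle.
Variable R : realType.
Local Notation C := (R[i]).

Definition cdot (n : nat) (x y : 'cV[C]_n) : C :=
  \sum_(i < n) conjc (x i 0) * y i 0.

Definition vnorm (n : nat) (x : 'cV[C]_n) : R := Num.sqrt (complex.Re (cdot x x)).

Definition sratio (n : nat) (A : 'M[C]_n) (x : 'cV[C]_n) : R :=
  complex.Re (cdot x (A *m x)) / (vnorm x * vnorm (A *m x)).

Definition cos_sangle (n : nat) (A : 'M[C]_n) : R :=
  inf [set sratio A x | x in [set x : 'cV[C]_n | x != 0 /\ A *m x != 0]].

Definition sangle (n : nat) (A : 'M[C]_n) : R := acos (cos_sangle A).

End SingularAngle.

(* Main.v *)
Require Import Defs.
From HB Require Import structures.
From mathcomp Require Import all_boot all_order all_algebra.
From mathcomp Require Import all_classical all_reals all_analysis.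
From mathcomp Require Import complex.
From mathcomp Require Import ring lra.
Import Order.TTheory GRing.Theory Num.Theory.
Local Open Scope ring_scope.
Set Implicit Arguments. Unset Strict Implicit.

Lemma alg_id (F : comRingType) (a b r : F) :
  b^+2*a^+2 + a^+2*b^+2 + 2*a*b*r = 2*a*b*(a*b+r).
Proof. ring. Qed.

Lemma aux_lt (F : realDomainType) (a b p : F) : a + b < p -> b < p - a.
Proof. lra. Qed.

Section Aux.
Variable R : realType.
Local Notation C := (R[i]).

Definition rdot (n : nat) (x y : 'cV[C]_n) : R :=
  \sum_(i < n) (complex.Re (x i 0) * complex.Re (y i 0) + complex.Im (x i 0) * complex.Im (y i 0)).

Lemma ReCdot n (x y : 'cV[C]_n) : complex.Re (cdot x y) = rdot x y.
Proof.
rewrite /cdot /rdot.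
elim/big_rec2: _ => [//|i a b _ <-].
by case: (x i 0) => p q; case: (y i 0) => r s; case: b => u v /=; rewrite mulNr opprK.
Qed.

Lemma rdotC n (x y : 'cV[C]_n) : rdot x y = rdot y x.
Proof. by apply: eq_bigr => i _; rewrite mulrC; congr (_ + _); rewrite mulrC. Qed.

Lemma rdotN n (x y : 'cV[C]_n) : rdot x (- y) = - rdot x y.
Proof.
rewrite /rdot -sumrN; apply: eq_bigr => i _; rewrite mxE.
by case: (y i 0) => p q /=; rewrite opprD !mulrN.
Qed.

Lemma rdotNl n (x y : 'cV[C]_n) : rdot (- x) y = - rdot x y.
Proof. by rewrite rdotC rdotN rdotC. Qed.

Lemma rdot_ge0 n (x : 'cV[C]_n) : 0 <= rdot x x.
Proof. by apply: sumr_ge0 => i _; rewrite -!expr2 addr_ge0 // sqr_ge0. Qed.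

Lemma vnormE n (x : 'cV[C]_n) : vnorm x = Num.sqrt (rdot x x).
Proof. by rewrite /vnorm ReCdot. Qed.

Lemma vnorm_sq n (x : 'cV[C]_n) : vnorm x ^+ 2 = rdot x x.
Proof. by rewrite vnormE sqr_sqrtr // rdot_ge0. Qed.

Lemma vnormN n (x : 'cV[C]_n) : vnorm (- x) = vnorm x.
Proof. by rewrite !vnormE rdotN rdotNl opprK. Qed.

Lemma rdot_gt0 n (x : 'cV[C]_n) : x != 0 -> 0 < rdot x x.
Proof.
move=> hx; rewrite lt_def rdot_ge0 andbT; apply/negP => /eqP h.
move/negP: hx; apply; apply/eqP/matrixP => i j; rewrite (ord1 j) mxE.
have := h; rewrite /rdot => /eqP; rewrite psumr_eq0; last first.
  by move=> k _; rewrite -!expr2 addr_ge0 // sqr_ge0.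
move/allP/(_ i (mem_index_enum _)); rewrite implyTb -!expr2 paddr_eq0 ?sqr_ge0 //.
rewrite !sqrf_eq0; case: (x i 0) => p q /= /andP[/eqP -> /eqP ->] //.
Qed.

Lemma vnorm_gt0 n (x : 'cV[C]_n) : x != 0 -> 0 < vnorm x.
Proof. by move=> hx; rewrite vnormE sqrtr_gt0 rdot_gt0. Qed.

Lemma cs_lower n (x y : 'cV[C]_n) : x != 0 -> y != 0 ->
  - (vnorm x * vnorm y) <= rdot x y.
Proof.
move=> hx hy; set a := vnorm x; set b := vnorm y.
have ha : 0 < a by apply: vnorm_gt0.
have hb : 0 < b by apply: vnorm_gt0.
have H : 0 <= \sum_(i < n) ((b * complex.Re (x i 0) + a * complex.Re (y i 0)) ^+ 2
   + (b * complex.Im (x i 0) + a * complex.Im (y i 0)) ^+ 2).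
  by apply: sumr_ge0 => i _; rewrite addr_ge0 // sqr_ge0.
have E : \sum_(i < n) ((b * complex.Re (x i 0) + a * complex.Re (y i 0)) ^+ 2
   + (b * complex.Im (x i 0) + a * complex.Im (y i 0)) ^+ 2)
   = b ^+ 2 * rdot x x + a ^+ 2 * rdot y y + (2 * a * b) * rdot x y.
  rewrite /rdot !mulr_sumr -!big_split /=; apply: eq_bigr => i _; ring.
rewrite E -(vnorm_sq x) -(vnorm_sq y) -/a -/b in H.
have hab : 0 < a * b by rewrite mulr_gt0.
rewrite -subr_ge0 opprK.
have : 0 <= (2 * a * b) * (a * b + rdot x y).
  apply: le_trans H _; rewrite le_eqVlt; apply/orP; left; apply/eqP.
  exact: alg_id.
have h2 : 0 < 2 * a * b by rewrite -mulrA mulr_gt0.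
by rewrite (pmulr_rge0 _ h2) addrC.
Qed.

End Aux.

Theorem theorem2 (R : realType) (n : nat) (A B : 'M[R[i]]_n) :
  A != 0 -> B != 0 -> sangle A + sangle B < pi ->
  \det (1%:M + B *m A) != 0.
Proof.
move=> _ _ hpi; apply/negP => /eqP hdet.
have : \det (1%:M + B *m A)^T == 0 by rewrite det_tr hdet.
case/det0P => v hv0 hv.
set x := v^T.
have hx0 : x != 0 by rewrite /x -(trmx0) (inj_eq trmx_inj).
have hx : (1%:M + B *m A) *m x = 0.
  by apply: trmx_inj; rewrite trmx_mul trmxK hv trmx0.
have hBy : B *m (A *m x) = - x.
  by apply/eqP; rewrite -subr_eq0 opprK addrC -[x in x + _]mul1mx mulmxA -mulmxDl -hx.
set y := A *m x.
have hy0 : y != 0.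
  apply/negP => /eqP hy; move/negP: hx0; apply.
  by rewrite -oppr_eq0 -hBy -/y hy mulmx0.
have hBy0 : B *m y != 0 by rewrite hBy oppr_eq0.
set cA := cos_sangle A; set cB := cos_sangle B.
have hpi' : acos cA + acos cB < pi := hpi.
have lbS (M : 'M[R[i]]_n) : has_lbound [set sratio M z | z in [set z : 'cV[R[i]]_n | z != 0 /\ M *m z != 0]].
  exists (-1) => _ [z [hz hMz] <-].
  rewrite /sratio ReCdot ler_pdivlMr ?mulr_gt0 ?vnorm_gt0 // mulN1r.
  exact: cs_lower.
have hA1 : cA <= sratio A x.
  by apply: (ge_inf (lbS A)); exists x.
have hB1 : cB <= sratio B y.
  by apply: (ge_inf (lbS B)); exists y.
have hA2 : -1 <= cA.
  apply: lb_le_inf; first by exists (sratio A x), x.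
  by move=> _ [z [hz hMz] <-]; rewrite /sratio ReCdot ler_pdivlMr ?mulr_gt0 ?vnorm_gt0 // mulN1r cs_lower.
have hB2 : -1 <= cB.
  apply: lb_le_inf; first by exists (sratio B y), y.
  by move=> _ [z [hz hMz] <-]; rewrite /sratio ReCdot ler_pdivlMr ?mulr_gt0 ?vnorm_gt0 // mulN1r cs_lower.
clearbody cA cB.
have hsum : cB <= - cA.
  have e : sratio B y = - sratio A x.
    rewrite /sratio hBy vnormN !ReCdot rdotN rdotC -/y.
    by rewrite mulNr [vnorm y * _]mulrC.
  by rewrite e in hB1; apply: (le_trans hB1); rewrite lerN2.
have hA3 : cA <= 1 by rewrite -lerN2; apply: le_trans hB2 hsum.
have hB3 : cB <= 1 by apply: (le_trans hsum); rewrite lerNl.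
have hNA : -1 <= - cA <= 1 by rewrite lerN2 hA3 lerNl hA2.
have hBr : -1 <= cB <= 1 by rewrite hB2 hB3.
have hlt : acos cB < acos (- cA).
  rewrite acosN; last by rewrite hA2 hA3.
  exact: (@aux_lt _ (acos cA) (acos cB) pi hpi').
have := hlt; rewrite -ltr_cos; last 2 first.
- by rewrite in_itv /= acos_ge0 // acos_lepi.
- by rewrite in_itv /= acos_ge0 // acos_lepi.
rewrite !acosK ?in_itv //= => h.
by move: (lt_le_trans h hsum); rewrite ltxx.
Qed.
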